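(* Let $p$ be a prime, let $(\mathcal G,\Gamma)$ be a finite proper graph of pro-$p$ groups, $G=\Pi_1(\mathcal G,\Gamma)$, and let $U$ be a (closed) normal subgroup of $G$. Put $\tilde U=\langle \mathcal G(v)^g\cap U\mid g\in G,\ v\in V(\Gamma)\rangle$ (closed subgroup generated). Then $\tilde U$ is normal in $G$ and $G/\tilde U\cong\Pi_1(\mathcal G_U,\Gamma)$, where $(\mathcal G_U,\Gamma)$ is the graph of pro-$p$ groups with $\mathcal G_U(m)=\mathcal G(m)U/U$ for each vertex or edge $m$ of $\Gamma$, and boundary maps $\partial_0,\partial_1$ the natural inclusions in $G/U$.
   Context: A finite graph of pro-$p$ groups $(\mathcal G,\Gamma)$ over a finite graph $\Gamma$ (maps $d_0,d_1$ giving edge endpoints) assigns pro-$p$ groups $\mathcal G(v)$, $\mathcal G(e)$ and monomorphisms $\partial_i:\mathcal G(e)\to\mathcal G(d_i(e))$. Its fundamental pro-$p$ group, with respect to a maximal subtree $D$, is given by the pro-$p$ presentation $\langle\mathcal G(v),t_e\mid t_e=1\ (e\in D),\ \partial_0(g)=t_e\partial_1(g)t_e^{-1}\ (g\in\mathcal G(e))\rangle$. Proper means each $\mathcal G(v)\to\Pi_1$ is injective, and vertex/edge groups are identified with their images in $G$. $h^g=g^{-1}hg$. *)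

(* Defs.v *)
From HB Require Import structures.
From mathcomp Require Import all_boot monoid.
From mathcomp Require Import classical_sets topology.

Set Implicit Arguments.
Unset Strict Implicit.
Unset Printing Implicit Defensive.

Local Open Scope classical_set_scope.
Local Open Scope group_scope.

HB.mixin Record isTopGroup G of Group G & Topological G := {
  mulg_continuous : continuous (fun xy : (G : topologicalType) * (G : topologicalType) => xy.1 * xy.2);
  invg_continuous : continuous (@inv G : (G : topologicalType) -> (G : topologicalType))
}.

#[short(type="topGroupType")]
HB.structure Definition TopGroup := {G of isTopGroup G & Group G & Topological G}.

(* All groups below are subsets H of an ambient topological group T, with the
   subspace topology. *)
Section SetGroups.
Variable T : topGroupType.

Definition subgroup (H : set T) : Prop :=
  H 1 /\ forall x y, H x -> H y -> H (x * y^-1).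

Definition rel_open (A H : set T) : Prop := exists O, open O /\ A = O `&` H.
Definition rel_closed (A H : set T) : Prop := exists C, closed C /\ A = C `&` H.

Definition normal_in (N H : set T) : Prop :=
  subgroup N /\ N `<=` H /\ forall g x, H g -> N x -> N (x ^ g).

Definition rel_hausdorff (H : set T) : Prop :=
  forall x y, H x -> H y -> x <> y ->
    exists A B, [/\ open A, open B, A x, B y & A `&` B `&` H = set0].

Definition index_ppow (p : nat) (N H : set T) : Prop :=
  exists (s : seq T) (k : nat),
    [/\ size s = (p ^ k)%N,
        forall x, x \in s -> H x,
        forall i j, (i < size s)%N -> (j < size s)%N ->
           N ((nth 1 s i)^-1 * nth 1 s j) -> i = j
      & forall h, H h -> exists2 i, (i < size s)%N & N ((nth 1 s i)^-1 * h)].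

(* H is a pro-p group: a compact Hausdorff totally disconnected (i.e. the open
   normal subgroups form a base of neighbourhoods of 1) topological group in
   which every open normal subgroup has p-power index. *)
Definition pro_p (p : nat) (H : set T) : Prop :=
  [/\ subgroup H, compact H, rel_hausdorff H,
      (forall O, open O -> O 1 -> exists N, [/\ normal_in N H, rel_open N H & N `<=` O])
    & (forall N, normal_in N H -> rel_open N H -> index_ppow p N H)].

Definition closed_gen (H S : set T) : set T :=
  \bigcap_(K in [set K | [/\ subgroup K, K `<=` H, rel_closed K H & S `<=` K]]) K.

End SetGroups.

Definition hom (T1 T2 : topGroupType) (H1 : set T1) (H2 : set T2) (f : T1 -> T2) : Prop :=
  [/\ forall x y, H1 x -> H1 y -> f (x * y) = f x * f y,
      f @` H1 `<=` H2
    & {within H1, continuous f}].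

Definition mono (T1 T2 : topGroupType) (H1 : set T1) (H2 : set T2) (f : T1 -> T2) : Prop :=
  hom H1 H2 f /\ forall x y, H1 x -> H1 y -> f x = f y -> x = y.

(* (HR, rho) realizes the quotient group H/N: rho is a continuous surjective
   homomorphism from H onto the Hausdorff group HR with kernel N (as H is compact,
   rho then induces a topological isomorphism H/N ~ HR). *)
Definition is_quotient (T R : topGroupType) (H N : set T) (HR : set R) (rho : T -> R) : Prop :=
  [/\ hom H HR rho, rho @` H = HR, rel_hausdorff HR & forall x, H x -> (rho x = 1 <-> N x)].

Section Tree.
Local Unset Implicit Arguments.
Definition spanning_tree (V E : finType) (d0 d1 : E -> V) (D : {set E}) : Prop :=
  (forall x y : V, connect [rel a b | [exists e in D,
       ((d0 e == a) && (d1 e == b)) || ((d0 e == b) && (d1 e == a))]] x y)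
  /\ #|D|.+1 = #|V|.
End Tree.

Section GraphOfGroups.
Local Unset Implicit Arguments.
Variables (p : nat) (V E : finType) (d0 d1 : E -> V).
Variables (TV : V -> topGroupType) (HV : forall v, set (TV v)).
Variables (TE : E -> topGroupType) (HE : forall e, set (TE e)).
Variables (del0 : forall e, TE e -> TV (d0 e)) (del1 : forall e, TE e -> TV (d1 e)).

Definition graph_of_pro_p : Prop :=
  [/\ forall v : V, pro_p p (HV v), forall e : E, pro_p p (HE e),
      forall e : E, mono (HE e) (HV (d0 e)) (del0 e)
    & forall e : E, mono (HE e) (HV (d1 e)) (del1 e)].

Definition pi1_data (D : {set E}) (T : topGroupType) (H : set T)
    (iota : forall v, TV v -> T) (t : E -> T) : Prop :=
  [/\ forall v, hom (HV v) H (iota v),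
      forall e, H (t e),
      forall e, e \in D -> t e = 1
    & forall e g, HE e g -> iota (d0 e) (del0 e g) = t e * iota (d1 e) (del1 e g) * (t e)^-1].

(* H (with iota, t) is the fundamental pro-p group w.r.t. D, i.e. the pro-p group
   given by the pro-p presentation <G(v), t_e | t_e = 1 (e in D),
   del0(g) = t_e del1(g) t_e^-1>, characterised by its universal property. *)
Definition is_pi1 (D : {set E}) (T : topGroupType) (H : set T)
    (iota : forall v, TV v -> T) (t : E -> T) : Prop :=
  [/\ pro_p p H, pi1_data D T H iota t
    & forall (K : topGroupType) (HK : set K) (iotaK : forall v, TV v -> K) (tK : E -> K),
        pro_p p HK -> pi1_data D K HK iotaK tK ->
        let ok phi := [/\ hom H HK phi,
                          forall v x, HV v x -> phi (iota v x) = iotaK v x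
                        & forall e, phi (t e) = tK e] in
        (exists phi, ok phi) /\
        (forall phi1 phi2, ok phi1 -> ok phi2 -> forall x, H x -> phi1 x = phi2 x)].

End GraphOfGroups.

(* Main.v *)
Require Import Defs.
From HB Require Import structures.
From mathcomp Require Import all_boot monoid.
From mathcomp Require Import classical_sets topology.
Local Open Scope classical_set_scope.
Local Open Scope group_scope.

From mathcomp Require Import boolp.
From Stdlib Require Import ClassicalEpsilon.
Set Implicit Arguments.
Unset Strict Implicit.
Unset Printing Implicit Defensive.

Set Implicit Arguments.
Unset Strict Implicit.
Unset Printing Implicit Defensive.
Local Open Scope classical_set_scope.
Local Open Scope group_scope.

Lemma wcontP (X Y : topologicalType) (A : set X) (f : X -> Y) :
  {within A, continuous f} <->
  forall O, open O -> exists2 O', open O' & O' `&` A = (f @^-1` O) `&` A.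
Proof.
split.
  move=> /continuousP hf O oO; have := hf O oO.
  by move/open_subspaceP.
move=> h; apply/continuousP => O oO; apply/open_subspaceP.
exact: h.
Qed.

Lemma contP (X Y : topologicalType) (f : X -> Y) :
  continuous f -> forall O, open O -> open (f @^-1` O).
Proof. by move/continuousP. Qed.

Section TG.
Variable T : topGroupType.

Lemma mul_cont2 (O : set T) a b : open O -> O (a * b) ->
  exists Oa, exists Ob, [/\ open Oa, open Ob, Oa a, Ob b &
     forall x y, Oa x -> Ob y -> O (x * y)].
Proof.
move=> oO Oab.
have : nbhs ((a, b) : T * T) ((fun xy : T * T => xy.1 * xy.2) @^-1` O).
  apply: (@mulg_continuous T (a, b)).
  by rewrite /= nbhsE; exists O => //; split.
case=> [[P Q]] /= [nP nQ] sPQ.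
move: nP nQ; rewrite !nbhsE => -[Pa [oPa Paa] sP] [Qb [oQb Qbb] sQ].
exists Pa, Qb; split => // x y Px Qy.
by apply: (sPQ (x, y)); split; [apply: sP|apply: sQ].
Qed.

Lemma inv_open (O : set T) : open O -> open [set x | O x^-1].
Proof. by move=> oO; apply: (contP (@invg_continuous T)). Qed.

Lemma mulr_open (O : set T) a : open O -> open [set x | O (x * a)].
Proof.
move=> oO; rewrite openE => x /= Oxa.
have [Oa [Ob [oOa oOb Oax Oba h]]] := mul_cont2 oO Oxa.
rewrite /interior nbhsE; exists Oa; first by split.
by move=> y Oy /=; apply: h.
Qed.

Lemma mull_open (O : set T) a : open O -> open [set x | O (a * x)].
Proof.
move=> oO; rewrite openE => x /= Oxa.
have [Oa [Ob [oOa oOb Oax Oba h]]] := mul_cont2 oO Oxa.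
rewrite /interior nbhsE; exists Ob; first by split.
by move=> y Oy /=; apply: h.
Qed.

Lemma closedC_open (C : set T) : closed C -> open (~` C).
Proof. by move=> cC; rewrite openC. Qed.
End TG.

Section SG.
Variable T : topGroupType.
Implicit Types G N : set T.
Lemma sg1 G : subgroup G -> G 1. Proof. by case. Qed.
Lemma sgV G x : subgroup G -> G x -> G x^-1.
Proof. by move=> [h1 hm] Gx; have := hm 1 x h1 Gx; rewrite mul1g. Qed.
Lemma sgM G x y : subgroup G -> G x -> G y -> G (x * y).
Proof. by move=> sG Gx Gy; have := (sG.2 x y^-1 Gx (sgV sG Gy)); rewrite invgK. Qed.
End SG.

Set Implicit Arguments.
Unset Strict Implicit.
Unset Printing Implicit Defensive.
Local Open Scope classical_set_scope.
Local Open Scope group_scope.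


Section Quot.
Variables (T : topGroupType) (G N : set T).
Variable hyp : subgroup G /\ normal_in N G.
Let sG : subgroup G. Proof. exact: hyp.1. Qed.
Let nN : normal_in N G. Proof. exact: hyp.2. Qed.

Let sN : subgroup N. Proof. exact: nN.1. Qed.
Let NG : N `<=` G. Proof. exact: nN.2.1. Qed.
Let Nconj g x : G g -> N x -> N (x ^ g). Proof. exact: nN.2.2. Qed.

Definition g0 (x : T) : T := if pselect (G x) then x else 1.
Lemma G_g0 x : G (g0 x). Proof. rewrite /g0; destruct (pselect (G x)) => //; exact: sg1. Qed.
Lemma g0E x : G x -> g0 x = x. Proof. by rewrite /g0; destruct (pselect (G x)). Qed.

Definition repP (x : T) := fun y => G y /\ N ((g0 x)^-1 * y).
Definition rep (x : T) : T := epsilon (inhabits 1) (repP x).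
Lemma rep_spec x : G (rep x) /\ N ((g0 x)^-1 * rep x).
Proof.
rewrite /rep; apply: (epsilon_spec (inhabits 1) (repP x)); exists (g0 x); split; first exact: G_g0.
by rewrite mulVg; exact: sg1.
Qed.

Lemma Nrel_sym x y : N (x^-1 * y) -> N (y^-1 * x).
Proof. by move=> h; have := sgV sN h; rewrite invgM invgK. Qed.
Lemma Nrel_trans x y z : N (x^-1 * y) -> N (y^-1 * z) -> N (x^-1 * z).
Proof. by move=> h1 h2; have := sgM sN h1 h2; rewrite mulgA mulgK. Qed.

Lemma rep_eq x y : G x -> G y -> N (x^-1 * y) -> rep x = rep y.
Proof.
move=> Gx Gy h; rewrite /rep /repP (g0E Gx) (g0E Gy); congr epsilon.
apply: funext => z; apply: propext; split=> -[Gz hz]; split => //.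
  exact: Nrel_trans (Nrel_sym h) hz.
exact: Nrel_trans h hz.
Qed.

Lemma rep_rel x : G x -> N (x^-1 * rep x).
Proof. by move=> Gx; have [_] := rep_spec x; rewrite g0E. Qed.

Lemma rep_eqP x y : G x -> G y -> rep x = rep y <-> N (x^-1 * y).
Proof.
move=> Gx Gy; split; last exact: rep_eq.
move=> e; apply: Nrel_trans (rep_rel Gx) _; rewrite e.
exact: Nrel_sym (rep_rel Gy).
Qed.

Lemma rep_g0 x : rep (g0 x) = rep x.
Proof. by rewrite /rep /repP (g0E (G_g0 x)). Qed.

Lemma rep_idem x : rep (rep x) = rep x.
Proof.
have [Gr h] := rep_spec x.
rewrite -[RHS]rep_g0; apply: rep_eq => //; first exact: G_g0.
exact: Nrel_sym h.
Qed.

Lemma G_rep x : G (rep x). Proof. by case: (rep_spec x). Qed.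
Lemma rep_G x : G x -> rep x = rep x. Proof. by []. Qed.

Lemma rep_mull x y : G x -> G y -> rep (rep x * y) = rep (x * y).
Proof.
move=> Gx Gy; apply: rep_eq; [exact: sgM (G_rep x) Gy|exact: sgM|].
have := Nconj Gy (Nrel_sym (rep_rel Gx)).
by rewrite conjgE invgM !mulgA.
Qed.

Lemma rep_mulr x y : G x -> G y -> rep (x * rep y) = rep (x * y).
Proof.
move=> Gx Gy; apply: rep_eq; [exact: sgM Gx (G_rep y)|exact: sgM|].
have h := rep_rel Gy.
rewrite invgM -mulgA (mulgA x^-1) mulVg mul1g.
exact: Nrel_sym h.
Qed.

Lemma rep_inv x : G x -> rep (rep x)^-1 = rep x^-1.
Proof.
move=> Gx; apply: rep_eq; [exact: sgV (G_rep x)|exact: sgV|].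
have h := Nconj (sgV sG Gx) (rep_rel Gx).
rewrite invgK; move: h; rewrite conjgE invgK !mulgA mulgV mul1g.
move=> h; have := sgV sN h; by rewrite invgM invgK.
Qed.

Definition QT (_ : subgroup G /\ normal_in N G) := {x : T | rep x == x}.
Definition Q := QT hyp.
Definition mkQ (x : T) : Q := exist _ (rep x) (introT eqP (rep_idem x)).
Lemma valQ (a : Q) : rep (val a) = val a. Proof. by case: a => /= x /eqP. Qed.
Lemma G_valQ (a : Q) : G (val a). Proof. by rewrite -valQ; exact: G_rep. Qed.
Lemma mkQ_val (a : Q) : mkQ (val a) = a.
Proof. by apply: val_inj; rewrite /= valQ. Qed.
Lemma mkQ_eq x y : rep x = rep y -> mkQ x = mkQ y.
Proof. by move=> e; apply: val_inj; rewrite /= e. Qed.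

Definition Qone : Q := mkQ 1.
Definition Qmul (a b : Q) : Q := mkQ (val a * val b).
Definition Qinv (a : Q) : Q := mkQ (val a)^-1.

Lemma QmulA : associative Qmul.
Proof.
move=> a b c; rewrite /Qmul; apply: mkQ_eq => /=.
have Ga := G_valQ a; have Gb := G_valQ b; have Gc := G_valQ c.
by rewrite rep_mull ?rep_mulr ?mulgA //; apply: sgM.
Qed.
Lemma Qmul1 : left_id Qone Qmul.
Proof.
move=> a; rewrite /Qmul /Qone -[RHS]mkQ_val; apply: mkQ_eq => /=.
by rewrite rep_mull ?mul1g //; [exact: sg1|exact: G_valQ].
Qed.
Lemma Qmulg1 : right_id Qone Qmul.
Proof.
move=> a; rewrite /Qmul /Qone -[RHS]mkQ_val; apply: mkQ_eq => /=.
by rewrite rep_mulr ?mulg1 //; [exact: G_valQ|exact: sg1].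
Qed.
Lemma QmulV : left_inverse Qone Qinv Qmul.
Proof.
move=> a; rewrite /Qmul /Qone /Qinv; apply: mkQ_eq => /=.
have Ga := G_valQ a.
by rewrite rep_mull ?mulVg //; exact: sgV.
Qed.
Lemma QmulgV : right_inverse Qone Qinv Qmul.
Proof.
move=> a; rewrite /Qmul /Qone /Qinv; apply: mkQ_eq => /=.
have Ga := G_valQ a.
by rewrite rep_mulr ?mulgV //; exact: sgV.
Qed.

HB.instance Definition _ := [isSub for (@sval T (fun x => rep x == x)) : Q -> T].
HB.instance Definition _ := [Choice of Q by <:].
HB.instance Definition _ := isGroup.Build Q QmulA Qmul1 Qmulg1 QmulV QmulgV.

End Quot.


Set Implicit Arguments.
Unset Strict Implicit.
Unset Printing Implicit Defensive.
Local Open Scope classical_set_scope.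
Local Open Scope group_scope.

Lemma cont_openP (X Y : topologicalType) (f : X -> Y) :
  (forall x A, open A -> A (f x) -> nbhs x (f @^-1` A)) -> continuous f.
Proof.
move=> h x W /=; rewrite nbhsE => -[B [oB Bfx] sBW].
by apply: filterS (h x B oB Bfx) => y /sBW.
Qed.

Section QTop.
Variables (T : topGroupType) (G N : set T).
Variable hyp : subgroup G /\ normal_in N G.
Let sG : subgroup G. Proof. exact: hyp.1. Qed.
Let nN : normal_in N G. Proof. exact: hyp.2. Qed.
Let sN : subgroup N. Proof. exact: nN.1. Qed.
Let NG : N `<=` G. Proof. exact: nN.2.1. Qed.

Local Notation Q := (Q hyp).
Local Notation mkQ := (mkQ hyp).

Definition Qop (A : set Q) : Prop :=
  exists2 O, open O & O `&` G = [set x | A (mkQ x)] `&` G.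

Lemma QopT : Qop setT.
Proof. by exists setT => //; exact: openT. Qed.

Lemma QopI : setI_closed Qop.
Proof.
move=> A B [O1 o1 e1] [O2 o2 e2]; exists (O1 `&` O2); first exact: openI.
apply/seteqP; split=> x [[O1x O2x] Gx].
  have : (O1 `&` G) x by []. rewrite e1 => -[Ax _].
  have : (O2 `&` G) x by []. rewrite e2 => -[Bx _].
  by [].
have : ([set x | A (mkQ x)] `&` G) x by []. rewrite -e1 => -[? _].
have : ([set x | B (mkQ x)] `&` G) x by []. rewrite -e2 => -[? _].
by [].
Qed.

Lemma QopU (I : Type) (f : I -> set Q) : (forall i, Qop (f i)) -> Qop (\bigcup_i f i).
Proof.
move=> h.
have : forall i, exists O, open O /\ O `&` G = [set x | f i (mkQ x)] `&` G.
  by move=> i; have [O oO e] := h i; exists O.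
move=> /choice [Of hOf].
exists (\bigcup_i Of i); first by apply: bigcup_open => i _; exact: (hOf i).1.
apply/seteqP; split=> x [[i _ Ox] Gx].
  have : (Of i `&` G) x by []. rewrite (hOf i).2 => -[fx _].
  by split => //; exists i.
have : ([set x | f i (mkQ x)] `&` G) x by []. rewrite -(hOf i).2 => -[? _].
by split => //; exists i.
Qed.

HB.instance Definition _ := isOpenTopological.Build Q QopT QopI QopU.

Lemma QopenE (A : set Q) : open A = Qop A.
Proof. by []. Qed.


Lemma mkQ_mul x y : G x -> G y -> mkQ (x * y) = mkQ x * mkQ y.
Proof.
move=> Gx Gy; apply: mkQ_eq => /=.
by rewrite rep_mulr ?rep_mull //; exact: G_rep.
Qed.

Lemma mkQ_inv x : G x -> mkQ x^-1 = (mkQ x)^-1.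
Proof. by move=> Gx; apply: (@mkQ_eq _ _ _ hyp x^-1 (val (mkQ x))^-1) => /=; rewrite (rep_inv hyp). Qed.

Lemma mkQ1 : mkQ 1 = 1. Proof. by []. Qed.

Lemma mkQ_eqP x y : G x -> G y -> mkQ x = mkQ y <-> N (x^-1 * y).
Proof.
move=> Gx Gy; split=> [e|h].
  by apply/(rep_eqP hyp Gx Gy); exact: (congr1 val e).
by apply: mkQ_eq; apply/(rep_eqP hyp Gx Gy).
Qed.

Lemma mkQ1P x : G x -> mkQ x = 1 <-> N x.
Proof.
move=> Gx; have G1 := sg1 sG; split => h.
  have := (mkQ_eqP Gx G1).1 h; rewrite mulg1 => /(sgV sN); by rewrite invgK.
by apply/(mkQ_eqP Gx G1); rewrite mulg1; exact: sgV.
Qed.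

Lemma mkQ_surj (a : Q) : exists2 x, G x & mkQ x = a.
Proof. by exists (val a); [exact: G_valQ|exact: mkQ_val]. Qed.

Lemma mkQ_cont : {within G, continuous mkQ}.
Proof. by apply/wcontP => A [O oO e]; exists O. Qed.

Lemma mkQ_open (O : set T) : open O -> open (mkQ @` (O `&` G)).
Proof.
move=> oO; rewrite QopenE.
exists (\bigcup_(n in N) [set z | O (z * n)]).
  by apply: bigcup_open => n _; exact: mulr_open.
apply/seteqP; split=> x [].
  move=> [n Nn /= Oxn] Gx; split => //; exists (x * n).
    by split => //; apply: sgM => //; exact: NG.
  have Gxn : G (x * n) by apply: sgM => //; exact: NG.
  apply/(mkQ_eqP Gxn Gx).
  by rewrite invgM -mulgA mulVg mulg1; exact: sgV.
move=> [y [Oy Gy] e] Gx; split => //.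
exists (x^-1 * y); first by apply/(mkQ_eqP Gx Gy).
by rewrite /= mulgA mulgV mul1g.
Qed.


Lemma mkQ_nbhs (O : set T) x : open O -> O x -> G x -> nbhs (mkQ x) (mkQ @` (O `&` G)).
Proof.
move=> oO Ox Gx; apply: open_nbhs_nbhs; split; first exact: mkQ_open.
by exists x.
Qed.

Lemma Qmul_cont : continuous (fun ab : Q * Q => ab.1 * ab.2).
Proof.
apply: cont_openP => -[a b] A; rewrite QopenE => -[O oO e] /=.
have [x Gx <-] := mkQ_surj a; have [y Gy <-] := mkQ_surj b => Aab.
have Gxy : G (x * y) by apply: sgM.
have Oxy : O (x * y).
  have : ([set z | A (mkQ z)] `&` G) (x * y) by split => //=; rewrite mkQ_mul.
  by rewrite -e => -[].
have [Oa [Ob [oOa oOb Oax Oby h]]] := mul_cont2 oO Oxy.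
exists (mkQ @` (Oa `&` G), mkQ @` (Ob `&` G)); first by split; apply: mkQ_nbhs.
move=> [a' b'] /= [[x' [Ox' Gx'] <-] [y' [Oy' Gy'] <-]] /=.
have : (O `&` G) (x' * y') by split; [exact: h|exact: sgM].
by rewrite e => -[/=]; rewrite mkQ_mul.
Qed.

Lemma Qinv_cont : continuous (fun a : Q => a^-1).
Proof.
apply: cont_openP => a A; rewrite QopenE => -[O oO e] /=.
have [x Gx <-] := mkQ_surj a => Aa.
have Gx' : G x^-1 by exact: sgV.
have Ox : [set z | O z^-1] x.
  have : ([set z | A (mkQ z)] `&` G) x^-1 by split => //=; rewrite mkQ_inv.
  by rewrite -e => -[].
apply: filterS (mkQ_nbhs (inv_open oO) Ox Gx).
move=> a' /= [x' [Ox' Gx'1] <-].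
have : (O `&` G) x'^-1 by split => //; exact: sgV.
by rewrite e => -[/=]; rewrite mkQ_inv.
Qed.

HB.instance Definition _ := isTopGroup.Build Q Qmul_cont Qinv_cont.

End QTop.

Set Implicit Arguments.
Unset Strict Implicit.
Unset Printing Implicit Defensive.
Local Open Scope classical_set_scope.
Local Open Scope group_scope.

Section QProps.
Variables (T : topGroupType) (G N : set T).
Variable hyp : subgroup G /\ normal_in N G.
Let sG : subgroup G. Proof. exact: hyp.1. Qed.
Let nN : normal_in N G. Proof. exact: hyp.2. Qed.
Let sN : subgroup N. Proof. exact: nN.1. Qed.
Let NG : N `<=` G. Proof. exact: nN.2.1. Qed.

Local Notation Q := (Q hyp).
Local Notation mkQ := (mkQ hyp).

Lemma Q_hausdorff : rel_closed N G -> rel_hausdorff (setT : set Q).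
Proof.
move=> [C [cC eN]] a b _ _; have [x Gx <-] := mkQ_surj a; have [y Gy <-] := mkQ_surj b.
move=> nexy.
have NC : forall z, N z -> C z by move=> z; rewrite eN => -[].
have nC : ~ C (x^-1 * y).
  move=> Cz; apply: nexy; apply/(mkQ_eqP hyp Gx Gy); rewrite eN; split => //.
  by apply: sgM => //; exact: sgV.
have oW : open (~` C) by exact: closedC_open.
have [Oa [Ob [oOa oOb Oax Oby h]]] := mul_cont2 oW nC.
exists (mkQ @` ([set u | Oa u^-1] `&` G)), (mkQ @` (Ob `&` G)); split.
- by apply: mkQ_open; exact: inv_open.
- exact: mkQ_open.
- by exists x.
- by exists y.
apply/seteqP; split => // q [[[u [Ou Gu] <-] [v [Ov Gv] e]] _].
have : N (u^-1 * v) by apply/(mkQ_eqP hyp Gu Gv).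
move/NC => Cuv; exact: (h _ _ Ou Ov Cuv).
Qed.


Lemma Q_compact : compact G -> compact (setT : set Q).
Proof.
move=> cG; have -> : (setT : set Q) = mkQ @` G.
  by apply/seteqP; split => // a _; have [x Gx <-] := mkQ_surj a; exists x.
apply: continuous_compact => //; exact: mkQ_cont.
Qed.

Lemma mkQ_conj x g : G x -> G g -> mkQ (x ^ g) = (mkQ x) ^ (mkQ g).
Proof.
move=> Gx Gg; rewrite conjgE mkQ_mul ?mkQ_inv ?mkQ_mul //; try exact: sgV.
exact: sgM.
Qed.

Lemma Q_base :
  (forall O, open O -> O 1 -> exists K, [/\ normal_in K G, rel_open K G & K `<=` O]) ->
  forall O : set Q, open O -> O 1 ->
    exists M, [/\ normal_in M setT, rel_open M setT & M `<=` O].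
Proof.
move=> hb O; rewrite QopenE => -[O' oO' e] O1.
have G1 := sg1 sG.
have O'1 : O' 1.
  have : ([set x | O (mkQ x)] `&` G) 1 by [].
  by rewrite -e => -[].
have [K [[sK [KG Kc]] [K' [oK' eK]] KO]] := hb O' oO' O'1.
have KK' : forall k, K k -> K' k /\ G k by move=> k; rewrite eK.
exists (mkQ @` K); split.
- split; [split|split] => //.
  + by exists 1 => //; exact: sg1.
  + move=> _ _ [k1 K1 <-] [k2 K2 <-]; exists (k1 * k2^-1); first exact: sK.2 _ _ K1 K2.
    have GK1 := KG _ K1; have GK2 := KG _ K2; have GK2' := sgV sG GK2.
    by rewrite mkQ_mul ?mkQ_inv.
  + move=> g _ _ [k Kk <-]; have [h Gh <-] := mkQ_surj g.
    by exists (k ^ h); [exact: Kc|rewrite mkQ_conj //; exact: KG _ Kk].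
- exists (mkQ @` K); split; last by rewrite setIT.
  have -> : mkQ @` K = mkQ @` (K' `&` G) by rewrite -eK.
  exact: mkQ_open.
- move=> _ [k Kk <-].
  have : (O' `&` G) k by split; [exact: KO|exact: KG].
  by rewrite e => -[].
Qed.


Lemma Q_index p :
  (forall K, normal_in K G -> rel_open K G -> index_ppow p K G) ->
  forall M : set Q, normal_in M setT -> rel_open M setT -> index_ppow p M setT.
Proof.
move=> hi M [sM [_ Mc]] [M' [oM' eM]].
rewrite setIT in eM; subst M'.
move: oM'; rewrite QopenE => -[O oO e].
pose K := [set x | G x /\ M (mkQ x)].
have hK : normal_in K G.
  split; [split|split].
  - by split; [exact: sg1|exact: sM.1].
  - move=> x y [Gx Mx] [Gy My]; split; first by apply: sgM => //; exact: sgV.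
    rewrite mkQ_mul ?mkQ_inv //; [exact: sM.2 | exact: sgV].
  - by move=> x [].
  - move=> g x Gg [Gx Mx]; split; first by rewrite conjgE; apply: sgM => //; [exact: sgV|exact: sgM].
    by rewrite mkQ_conj //; apply: Mc.
have oK : rel_open K G.
  exists O; split => //; rewrite e; apply/seteqP; split => x; first by case=> ? ?; split.
  by case=> ? ?; split.
have [s [k [ss sG' sd sc]]] := hi K hK oK.
exists (map mkQ s), k; split.
- by rewrite size_map.
- by [].
- move=> i j; rewrite size_map => hi' hj.
  rewrite !(nth_map 1) //.
  have Gi : G (nth 1 s i) by apply: sG'; exact: mem_nth.
  have Gj : G (nth 1 s j) by apply: sG'; exact: mem_nth.
  rewrite -mkQ_inv // -mkQ_mul //; last exact: sgV.
  by move=> Mij; apply: sd => //; split => //; apply: sgM => //; exact: sgV.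
- move=> h _; have [x Gx <-] := mkQ_surj h.
  have [i hi' [_ Mi]] := sc x Gx.
  exists i; first by rewrite size_map.
  have Gi : G (nth 1 s i) by apply: sG'; exact: mem_nth.
  by rewrite (nth_map 1) // -mkQ_inv // -mkQ_mul //; exact: sgV.
Qed.

Lemma Q_pro_p p : pro_p p G -> rel_closed N G -> pro_p p (setT : set Q).
Proof.
move=> [_ cG _ hb hi] cN; split.
- by split.
- exact: Q_compact.
- exact: Q_hausdorff.
- exact: Q_base.
- exact: Q_index.
Qed.

End QProps.

Set Implicit Arguments.
Unset Strict Implicit.
Unset Printing Implicit Defensive.
Local Open Scope classical_set_scope.
Local Open Scope group_scope.

Section CG.
Variables (T : topGroupType) (G S : set T).
Hypotheses (sG : subgroup G) (SG : S `<=` G).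

Let F := [set K | [/\ subgroup K, K `<=` G, rel_closed K G & S `<=` K]].

Lemma cgP x : closed_gen G S x <-> forall K, F K -> K x.
Proof. by []. Qed.

Lemma FG : F G.
Proof.
split => //; exists setT; split; [exact: closedT|by rewrite setTI].
Qed.

Lemma cg_sub : closed_gen G S `<=` G.
Proof. by move=> x /cgP; apply; exact: FG. Qed.

Lemma cg_S : S `<=` closed_gen G S.
Proof. by move=> x Sx; apply/cgP => K [_ _ _]; apply. Qed.

Lemma cg_subgroup : subgroup (closed_gen G S).
Proof.
split; first by apply/cgP => K [[]].
move=> x y /cgP hx /cgP hy; apply/cgP => K FK; case: (FK) => sK _ _ _.
by apply: sK.2; [exact: hx|exact: hy].
Qed.

Lemma cg_closed : rel_closed (closed_gen G S) G.
Proof.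
exists (\bigcap_(K in F) closure K); split.
  by apply: closed_bigI => K _; exact: closed_closure.
apply/seteqP; split => x.
  move=> hx; split; last exact: cg_sub.
  by move=> K FK; apply: subset_closure; exact: (hx K FK).
move=> [hx Gx]; apply/cgP => K FK; have := hx K FK.
case: FK => sK KG [C [cC eK]] SK.
have sKC : K `<=` C by move=> y; rewrite eK => -[].
move=> /(closureS sKC); rewrite -(closure_id C).1 // => Cx.
by rewrite eK.
Qed.

Lemma conj_closed (C : set T) h : closed C -> closed [set y | C (y ^ h)].
Proof.
move=> cC; rewrite -openC.
have := mull_open h^-1 (mulr_open h (closedC_open cC)).
by congr open; apply/seteqP; split => y /=; rewrite conjgE mulgA.
Qed.

Lemma cg_normal : (forall g x, G g -> S x -> S (x ^ g)) ->
  normal_in (closed_gen G S) G.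
Proof.
move=> hS; split; [exact: cg_subgroup|split; first exact: cg_sub].
move=> g x Gg /cgP hx.
have Gg' := sgV sG Gg.
apply/cgP => K [sK KG [C [cC eK]] SK].
pose K' := [set y | K (y ^ g)].
have : K' x; last by [].
apply: hx; split.
- split; first by rewrite /K' /= conj1g; exact: sK.1.
  move=> a b; rewrite /K' /= => Ka Kb.
  by rewrite conjMg conjVg; apply: sK.2.
- move=> y; rewrite /K' /= => /KG Gy.
  have -> : y = (y ^ g) ^ g^-1 by rewrite conjgK.
  by rewrite conjgE invgK; apply: sgM => //; apply: sgM.
- exists [set y | C (y ^ g)]; split; first exact: conj_closed.
  apply/seteqP; split => y.
    rewrite /K' /= eK => -[Cy Gy]; split => //.
    have -> : y = (y ^ g) ^ g^-1 by rewrite conjgK.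
    by rewrite conjgE invgK; apply: sgM => //; apply: sgM.
  move=> [Cy Gy]; rewrite /K' /= eK; split => //.
  by rewrite conjgE; apply: sgM => //; apply: sgM.
- by move=> y Sy; apply: SK; apply: hS.
Qed.

End CG.

Set Implicit Arguments.
Unset Strict Implicit.
Unset Printing Implicit Defensive.
Local Open Scope classical_set_scope.
Local Open Scope group_scope.

Lemma compact_rel_closed (T : topGroupType) (H K : set T) y :
  rel_hausdorff H -> compact K -> K `<=` H -> H y -> closure K y -> K y.
Proof.
move=> hH cK KH Hy cly; case: (pselect (K y)) => // nKy; exfalso.
have PF : ProperFilter (within K (nbhs y)) by apply: within_nbhs_proper.
have FK : within K (nbhs y) K by rewrite /within; apply: nearW.
have [k [Kk clk]] := cK _ PF FK.
have nyk : y <> k by move=> e; apply: nKy; rewrite e.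
have [A [B [oA oB Ay Bk e]]] := hH y k Hy (KH _ Kk) nyk.
have FA : within K (nbhs y) (A `&` K).
  rewrite /within; apply: filterS (open_nbhs_nbhs (conj oA Ay)) => z Az Kz.
  by split.
have [z [[Az Kz] Bz]] := clk _ _ FA (open_nbhs_nbhs (conj oB Bk)).
have : (A `&` B `&` H) z by split; [split|exact: KH].
by rewrite e.
Qed.

Lemma factor_cont (X Z : topologicalType) (Y : topGroupType) (A : set X) (H : set Y)
    (f : X -> Y) (g : X -> Z) (h : Y -> Z) :
  compact A -> rel_hausdorff H -> f @` A `<=` H ->
  {within A, continuous f} -> {within A, continuous g} ->
  (forall a, A a -> h (f a) = g a) -> {within f @` A, continuous h}.
Proof.
move=> cA hH fAH fc gc hfg; apply/wcontP => O oO.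
have [Og oOg eg] := (wcontP _ _).1 gc O oO.
have egP : forall a, A a -> (Og a <-> O (g a)).
  move=> a Aa; split => h1.
    by have : (Og `&` A) a by []; rewrite eg => -[].
  by have : ((g @^-1` O) `&` A) a by []; rewrite -eg => -[].
pose C := A `&` ~` Og.
have cC : compact C by apply: compact_closedI => //; exact: open_closedC.
have cK : compact (f @` C).
  apply: continuous_compact => //; apply: continuous_subspaceW fc.
  by move=> ? [].
exists (~` closure (f @` C)); first by apply: closed_openC; exact: closed_closure.
apply/seteqP; split => y [].
  move=> ncl [a Aa ey]; split; last by exists a.
  rewrite /= -ey hfg //; apply/(egP a Aa).
  case: (pselect (Og a)) => // nOa; exfalso; apply: ncl.
  by apply: subset_closure; rewrite -ey; exists a.
move=> /= Ohy [a Aa ey]; split; last by exists a.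
move=> cly.
have : (f @` C) y.
  apply: (compact_rel_closed hH cK) => //.
    by move=> _ [c [Ac _] <-]; apply: fAH; exists c.
  by apply: fAH; exists a.
move=> [c [Ac nOc] ec]; apply: nOc; apply/(egP c Ac).
by rewrite -hfg // ec.
Qed.

Lemma wcomp (X Y Z : topologicalType) (A : set X) (B : set Y) (f : X -> Y) (g : Y -> Z) :
  {within A, continuous f} -> f @` A `<=` B -> {within B, continuous g} ->
  {within A, continuous (g \o f)}.
Proof.
move=> fc fAB gc; apply/wcontP => O oO.
have [Og oOg eg] := (wcontP _ _).1 gc O oO.
have [Of oOf ef] := (wcontP _ _).1 fc Og oOg.
exists Of => //; apply/seteqP; split => x [h1 Ax]; split => //.
  have : (Og `&` B) (f x).
    by have : (Of `&` A) x by []; rewrite ef => -[? _]; split => //; apply: fAB; exists x.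
  by rewrite eg => -[].
have : ((g @^-1` O) `&` B) (f x) by split => //; apply: fAB; exists x.
rewrite -eg => -[? _].
by have : ((f @^-1` Og) `&` A) x by []; rewrite -ef => -[].
Qed.

Section Hom.
Variables (T1 T2 : topGroupType) (H1 : set T1) (H2 : set T2) (f : T1 -> T2).
Hypotheses (hf : hom H1 H2 f) (sH1 : subgroup H1).

Lemma hom_mul x y : H1 x -> H1 y -> f (x * y) = f x * f y.
Proof. by case: hf => m _ _; apply: m. Qed.

Lemma hom_in x : H1 x -> H2 (f x).
Proof. by case: hf => _ i _ Hx; apply: i; exists x. Qed.

Lemma hom1 : f 1 = 1.
Proof.
have H11 := sg1 sH1.
have e := hom_mul H11 H11; rewrite mulg1 in e.
by have := congr1 (fun z => (f 1)^-1 * z) e; rewrite mulVg mulKg => ->.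
Qed.

Lemma homV x : H1 x -> f x^-1 = (f x)^-1.
Proof.
move=> Hx; have Hx' := sgV sH1 Hx.
have e := hom_mul Hx Hx'; rewrite mulgV hom1 in e.
by apply: esym; apply: mulg1_eq; rewrite -e.
Qed.

Lemma homJ x g : H1 x -> H1 g -> f (x ^ g) = (f x) ^ (f g).
Proof.
move=> Hx Hg; have Hg' := sgV sH1 Hg.
by rewrite !conjgE hom_mul ?hom_mul ?homV //; apply: sgM.
Qed.

Lemma hom_cont : {within H1, continuous f}.
Proof. by case: hf. Qed.

Lemma ker_rel_closed : rel_hausdorff H2 -> subgroup H2 ->
  rel_closed [set x | H1 x /\ f x = 1] H1.
Proof.
move=> hH2 sH2; exists (closure [set x | H1 x /\ f x = 1]); split.
  exact: closed_closure.
apply/seteqP; split => x.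
  by move=> [Hx fx]; split => //; apply: subset_closure.
move=> [cl Hx]; split => //.
case: (pselect (f x = 1)) => // nfx; exfalso.
have [A [B [oA oB Ax B1 e]]] := hH2 _ _ (hom_in Hx) (sg1 sH2) nfx.
have [O' oO' e'] := (wcontP _ _).1 hom_cont A oA.
have O'x : O' x by have : ((f @^-1` A) `&` H1) x by []; rewrite -e' => -[].
have [z [[Hz fz] O'z]] := cl _ (open_nbhs_nbhs (conj oO' O'x)).
have : ((f @^-1` A) `&` H1) z by rewrite -e'.
move=> [Afz _].
have A1 : A 1 by rewrite -fz.
have : (A `&` B `&` H2) 1 by split; [split|exact: sg1].
by rewrite e.
Qed.

End Hom.

Lemma hom_comp (T1 T2 T3 : topGroupType) (H1 : set T1) (H2 : set T2) (H3 : set T3)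
  (f : T1 -> T2) (g : T2 -> T3) : hom H1 H2 f -> hom H2 H3 g -> hom H1 H3 (g \o f).
Proof.
move=> hf hg; split.
- by move=> x y Hx Hy /=; rewrite (hom_mul hf) // (hom_mul hg) //; apply: (hom_in hf).
- by move=> _ [x Hx <-]; apply: (hom_in hg); apply: (hom_in hf).
- apply: wcomp (hom_cont hf) _ (hom_cont hg).
  by move=> _ [x Hx <-]; apply: (hom_in hf).
Qed.

Set Implicit Arguments.
Unset Strict Implicit.
Unset Printing Implicit Defensive.
Local Open Scope classical_set_scope.
Local Open Scope group_scope.

Theorem proposition2p14 (p : nat) (hp : prime p)
    (V E : finType) (d0 d1 : E -> V) (D : {set E}) (hD : spanning_tree V E d0 d1 D)
    (TV : V -> topGroupType) (HV : forall v, set (TV v))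
    (TE : E -> topGroupType) (HE : forall e, set (TE e))
    (del0 : forall e, TE e -> TV (d0 e)) (del1 : forall e, TE e -> TV (d1 e))
    (hgraph : graph_of_pro_p p V E d0 d1 TV HV TE HE del0 del1)
    (T : topGroupType) (G : set T) (iota : forall v, TV v -> T) (t : E -> T)
    (hG : is_pi1 p V E d0 d1 TV HV TE HE del0 del1 D T G iota t)
    (hproper : forall v, mono (HV v) G (iota v))
    (U : set T) (hU : normal_in U G) (hUc : rel_closed U G) :
  let Ut := closed_gen G
      [set x | exists g v y, [/\ G g, HV v y, x = (iota v y) ^ g & U x]] in
  normal_in Ut G /\
  forall (R : topGroupType) (GU : set R) (rho : T -> R),
    is_quotient G U GU rho ->
    exists (Q : topGroupType) (GQ : set Q) (pi : T -> Q)
           (iotaQ : V -> R -> Q) (tQ : E -> Q),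
      is_quotient G Ut GQ pi /\
      is_pi1 p V E d0 d1
        (fun _ => R) (fun v => rho @` (iota v @` HV v))
        (fun _ => R) (fun e => rho @` (iota (d1 e) @` (del1 e @` HE e)))
        (fun e x => rho (t e) * x * (rho (t e))^-1) (fun e x => x)
        D Q GQ iotaQ tQ.
Proof.
move=> Ut.
have [pG [hiota ht htD hrel] univ] := hG.
have [pV pE m0 m1] := hgraph.
have sG : subgroup G by case: pG.
have sV v : subgroup (HV v) by case: (pV v).
have iotaG v y : HV v y -> G (iota v y) by move=> Hy; exact: (hom_in (hiota v) Hy).
pose S := [set x | exists g v y, [/\ G g, HV v y, x = (iota v y) ^ g & U x]].
have SG : S `<=` G.
  move=> _ [g [v [y [Gg Hy -> _]]]]; rewrite conjgE.
  have Gi := iotaG _ _ Hy.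
  by apply: (sgM sG); [exact: (sgV sG)|exact: (sgM sG)].
have SI : forall g x, G g -> S x -> S (x ^ g).
  move=> g _ Gg [h [v [y [Gh Hy -> Ux]]]]; exists (h * g), v, y; split => //.
  - exact: sgM.
  - by rewrite conjgM.
  - by apply: hU.2.2.
have nUt : normal_in Ut G := cg_normal sG SG SI.
have cUt : rel_closed Ut G := cg_closed sG SG.
split => //.
move=> R GU rho [hrho rhoim hGU kerrho].
pose hyp : subgroup G /\ normal_in Ut G := conj sG nUt.
pose pick v r := epsilon (inhabits 1) (fun y => HV v y /\ rho (iota v y) = r).
pose iotaQ v r := mkQ hyp (iota v (pick v r)).
pose tQ e := mkQ hyp (t e).
have rho1 : rho 1 = 1 := hom1 hrho sG.
have iotaQE v y : HV v y -> iotaQ v (rho (iota v y)) = mkQ hyp (iota v y).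
  move=> Hy.
  have := (epsilon_spec (inhabits 1) (fun y' => HV v y' /\ rho (iota v y') = rho (iota v y))).
  case; first by exists y.
  rewrite -/(pick v (rho (iota v y))) /iotaQ.
  move: (pick v _) => y' Hy' ey'.
  apply/(mkQ_eqP hyp (iotaG _ _ Hy') (iotaG _ _ Hy)).
  have Hy'1 := sgV (sV v) Hy'.
  have Hz := sgM (sV v) Hy'1 Hy.
  rewrite -(homV (hiota v) (sV v) Hy') -(hom_mul (hiota v) Hy'1 Hy).
  apply: cg_S; exists 1, v, (y'^-1 * y); split => //; first exact: sg1.
    by rewrite conjg1.
  apply/(kerrho _ (iotaG _ _ Hz)).
  rewrite (hom_mul (hiota v) Hy'1 Hy) (homV (hiota v) (sV v) Hy').
  rewrite (hom_mul hrho) ?(homV hrho sG) ?ey' ?mulVg //; try exact: iotaG.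
  by apply: (sgV sG); exact: iotaG.
have rhoG x : G x -> GU (rho x) by move=> Gx; exact: (hom_in hrho Gx).
have rhoM x y : G x -> G y -> rho (x * y) = rho x * rho y.
  by move=> Gx Gy; exact: (hom_mul hrho Gx Gy).
have rhoV x : G x -> rho x^-1 = (rho x)^-1 by move=> Gx; exact: (homV hrho sG Gx).
have iotaM v y z : HV v y -> HV v z -> iota v (y * z) = iota v y * iota v z.
  by move=> Hy Hz; exact: (hom_mul (hiota v) Hy Hz).
have HV0 e g : HE e g -> HV (d0 e) (del0 e g).
  by move=> Hg; case: (m0 e) => hm _; exact: (hom_in hm Hg).
have HV1 e g : HE e g -> HV (d1 e) (del1 e g).
  by move=> Hg; case: (m1 e) => hm _; exact: (hom_in hm Hg).
have relR e g : HE e g -> rho (t e) * rho (iota (d1 e) (del1 e g)) * (rho (t e))^-1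
                          = rho (iota (d0 e) (del0 e g)).
  move=> Hg; have G1 := iotaG _ _ (HV1 e g Hg).
  rewrite hrel // -rhoV // -!rhoM //; [exact: sgM | exact: sgV].
have rhoiota v : {within HV v, continuous (rho \o iota v)}.
  apply: wcomp (hom_cont (hiota v)) _ (hom_cont hrho).
  by move=> _ [y Hy <-]; exact: iotaG.
have imc v : rho @` (iota v @` HV v) = (rho \o iota v) @` HV v.
  apply/seteqP; split => r.
    by move=> [_ [y Hy <-] <-]; exists y.
  by move=> [y Hy <-]; exists (iota v y) => //; exists y.
exists (Q hyp), setT, (mkQ hyp), iotaQ, tQ.
split.
  split.
  - split; [by move=> x y Gx Gy; exact: mkQ_mul|by []|exact: mkQ_cont].
  - by apply/seteqP; split => // a _; have [x Gx <-] := mkQ_surj a; exists x.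
  - exact: Q_hausdorff cUt.
  - move=> x Gx; have := mkQ1P hyp Gx; exact.
split.
- have := Q_pro_p hyp pG cUt; exact.
- split.
  + move=> v; split.
    * move=> _ _ [_ [y Hy <-] <-] [_ [z Hz <-] <-].
      have Hyz := sgM (sV v) Hy Hz.
      rewrite -rhoM; try exact: iotaG.
      by rewrite -iotaM // !iotaQE // iotaM // mkQ_mul //; exact: iotaG.
    * by [].
    * rewrite imc; apply: (factor_cont (g := mkQ hyp \o iota v)).
      - by case: (pV v).
      - exact: hGU.
      - by move=> _ [y Hy <-]; apply: rhoG; exact: iotaG.
      - exact: rhoiota.
      - apply: wcomp (hom_cont (hiota v)) _ (@mkQ_cont _ _ _ hyp).
        by move=> _ [y Hy <-]; exact: iotaG.
      - by move=> y Hy /=; exact: iotaQE.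
  + by [].
  + by move=> e eD; rewrite /tQ htD.
  + move=> e _ [_ [_ [g Hg <-] <-] <-].
    rewrite relR // !iotaQE //; [|exact: HV1|exact: HV0].
    have G1 := iotaG _ _ (HV1 e g Hg).
    have Gt := ht e; have Gt' := sgV sG Gt; have G2 := sgM sG Gt G1.
    by rewrite hrel // /tQ -mkQ_inv // !(mkQ_mul hyp).
- move=> K HK iotaK tK pK [hK htK htKD hrelK].
  have [sK _ hausK _ _] := pK.
  pose iotaK' v (y : TV v) := iotaK v (rho (iota v y)).
  have hri v : hom (HV v) (rho @` (iota v @` HV v)) (rho \o iota v).
    split.
    - move=> y z Hy Hz /=; rewrite iotaM // rhoM //; exact: iotaG.
    - by move=> _ [y Hy <-]; exists (iota v y) => //; exists y.
    - exact: rhoiota.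
  have dK' : pi1_data V E d0 d1 TV HV TE HE del0 del1 D K HK iotaK' tK.
    split => //.
    - by move=> v; exact: (hom_comp (hri v) (hK v)).
    - move=> e g Hg; rewrite /iotaK' -relR //; apply: hrelK.
      by exists (iota (d1 e) (del1 e g)) => //; exists (del1 e g) => //; exists g.
  have [[psi [hpsi psiI psit]] uniq] := univ K HK iotaK' tK pK dK'.
  have psi1 : psi 1 = 1 := hom1 hpsi sG.
  have ker : Ut `<=` [set x | G x /\ psi x = 1].
    move=> x /cgP; apply; split.
    - split; first by split => //; exact: sg1.
      move=> a b [Ga pa] [Gb pb]; split; first by apply: (sgM sG) => //; exact: sgV.
      by rewrite (hom_mul hpsi) ?(homV hpsi sG) ?pa ?pb ?invg1 ?mulg1 //; exact: sgV.
    - by move=> ? [].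
    - exact: ker_rel_closed hpsi hausK sK.
    - move=> _ [g [v [y [Gg Hy -> Ux]]]].
      have Gi := iotaG _ _ Hy.
      have Sx : S (iota v y ^ g) by exists g, v, y.
      split; first exact: SG.
      rewrite (homJ hpsi sG Gi Gg) psiI //.
      have : rho (iota v y ^ g) = 1 by apply/kerrho => //; exact: SG.
      rewrite (homJ hrho sG Gi Gg) => e1.
      have e2 : rho (iota v y) = 1.
        by rewrite -[rho (iota v y)](conjgK (rho g)) e1 conj1g.
      rewrite /iotaK' e2.
      have i1 : iota v 1 = 1 := hom1 (hiota v) (sV v).
      have : psi (iota v 1) = iotaK' v 1 by apply: psiI; exact: sg1.
      by rewrite /iotaK' i1 rho1 psi1 => <-; rewrite conj1g.
  pose phi := fun q : Q hyp => psi (val q).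
  have psiQ x : G x -> phi (mkQ hyp x) = psi x.
    move=> Gx; rewrite /phi /=.
    have [Gr _] := ker _ (rep_rel hyp Gx).
    have Gx' := sgV sG Gx.
    have := hom_mul hpsi Gx Gr; rewrite mulgA mulgV mul1g => ->.
    by have [_ ->] := ker _ (rep_rel hyp Gx); rewrite mulg1.
  have hmkQ : hom G setT (mkQ hyp).
    by split; [move=> x y Gx Gy; exact: mkQ_mul|by []|exact: mkQ_cont].
  move=> ok; split.
    exists phi; split.
    - split.
      + move=> a b _ _; have [x Gx <-] := mkQ_surj a; have [y Gy <-] := mkQ_surj b.
        rewrite -mkQ_mul // !psiQ //; [exact: (hom_mul hpsi)|exact: sgM].
      + by move=> _ [q _ <-]; apply: (hom_in hpsi); exact: G_valQ.
      + apply/wcontP => O oO.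
        have [O1 oO1 e1] := (wcontP _ _).1 (hom_cont hpsi) O oO.
        exists (phi @^-1` O) => //; rewrite QopenE; exists O1 => //.
        rewrite e1; apply/seteqP; split => x [h Gx]; split => //=.
          by rewrite psiQ.
        by move: h; rewrite /= psiQ.
    - move=> v _ [_ [y Hy <-] <-]; rewrite iotaQE // psiQ; last exact: iotaG.
      exact: psiI.
    - by move=> e; rewrite /tQ psiQ.
  move=> phi1 phi2 [h1 i1 t1] [h2 i2 t2] q _.
  have okc : forall phi' : Q hyp -> K, hom setT HK phi' ->
      (forall v x, (rho @` (iota v @` HV v)) x -> phi' (iotaQ v x) = iotaK v x) ->
      (forall e, phi' (tQ e) = tK e) ->
      [/\ hom G HK (phi' \o mkQ hyp),
          forall v x, HV v x -> (phi' \o mkQ hyp) (iota v x) = iotaK' v x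
        & forall e, (phi' \o mkQ hyp) (t e) = tK e].
    move=> phi' hph ip tp; split.
    - exact: hom_comp hmkQ hph.
    - move=> v y Hy /=; rewrite -iotaQE //; apply: ip.
      by exists (iota v y) => //; exists y.
    - by move=> e; exact: tp.
  have := uniq _ _ (okc _ h1 i1 t1) (okc _ h2 i2 t2) (val q) (G_valQ q).
  by rewrite /= mkQ_val.
Qed.
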